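(* Let $n\ge1$ be an integer and let $A_{ij}$ be the coefficient of $u^iv^jw^{n+1-i-j}$ in $P_{1/(n+1)}(u,v,w)$ (equivalently, of $x^{2i}y^{2j}z^{2(n+1-i-j)}$ in the numerator of $M_{1/(n+1)}$). Then for all integers $i,j\ge0$ with $i+j\le n+1$ and $j\le n$, $$A_{ij}=\binom{n-j}{n+1-i-j}\binom{i+j}{j},$$ with the convention $\binom{m}{k}=0$ unless $0\le k\le m$; moreover $A_{0,n+1}=1$ and $A_{i,n+1}=0$ for $i>0$.
   Context: Markov polynomials. Let $x,y,z$ be indeterminates. Consider the set consisting of all rationals $\rho\in[0,1]$, each written in lowest terms $\rho=a/b$ with integers $a\ge 0$, $b\ge 1$, together with the formal symbol $1/0$. Define Laurent polynomials $M_\rho(x,y,z)$ recursively by $M_{1/0}=y$, $M_{0/1}=x$, $M_{1/1}=\frac{x^2+y^2}{z}$, and: whenever $a/b$, $c/d$ are in this set with $|ad-bc|=1$ and $(a+2c)/(b+2d)\in[0,1]$, then $M_{\frac{a+2c}{b+2d}}=\big(M_{c/d}^2+M_{\frac{a+c}{b+d}}^2\big)/M_{a/b}$. This determines $M_\rho$ for every rational $\rho\in[0,1]$. In particular $M_{1/(k+1)}=(M_{1/k}^2+x^2)/M_{1/(k-1)}$ for $k\ge1$. Numerator. For coprime $1\le a\le b$, $P_{a/b}(u,v,w)$ denotes the homogeneous polynomial of degree $a+b-1$ such that $M_{a/b}(x,y,z)=P_{a/b}(x^2,y^2,z^2)/(x^{a-1}y^{b-1}z^{a+b-1})$; its existence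 is known. *)

(* Defs.v *)
From HB Require Import structures.
From mathcomp Require Import all_boot all_order all_algebra.
From mathcomp Require Import mpoly fraction.
Set Implicit Arguments.
Unset Strict Implicit.
Unset Printing Implicit Defensive.
Import Order.TTheory GRing.Theory.
Local Open Scope ring_scope.

Notation Poly3 := {mpoly rat[3]}.
(* The field of rational functions Q(x,y,z); Laurent polynomials live in it. *)
Notation RatFun3 := {fraction Poly3}.

Definition xP : Poly3 := 'X_(0 : 'I_3).
Definition yP : Poly3 := 'X_(1 : 'I_3).
Definition zP : Poly3 := 'X_(2 : 'I_3).

Definition xF : RatFun3 := tofrac xP.
Definition yF : RatFun3 := tofrac yP.
Definition zF : RatFun3 := tofrac zP.

(* Markov_one k = M_{1/k}(x,y,z), defined by M_{1/0} = y,
   M_{1/1} = (x^2+y^2)/z and M_{1/(k+1)} = (M_{1/k}^2 + x^2)/M_{1/(k-1)}. *)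
Fixpoint Markov_one_pair (k : nat) : RatFun3 * RatFun3 :=
  match k with
  | 0 => (yF, (xF ^+ 2 + yF ^+ 2) / zF)
  | k'.+1 => let (a, b) := Markov_one_pair k' in (b, (b ^+ 2 + xF ^+ 2) / a)
  end.

Definition Markov_one (k : nat) : RatFun3 := (Markov_one_pair k).1.

(* P is the numerator of M_{1/b}:  P homogeneous of degree 1 + b - 1 = b and
   M_{1/b}(x,y,z) = P(x^2,y^2,z^2) / (x^0 y^(b-1) z^(1+b-1)). *)
Definition is_numerator_one (b : nat) (P : Poly3) : Prop :=
  P \is b.-homog /\
  Markov_one b =
    tofrac (P \mPo [tuple xP ^+ 2; yP ^+ 2; zP ^+ 2])
      / tofrac (yP ^+ b.-1 * zP ^+ b).

Definition mono3 (i j k : nat) : 'X_{1..3} := [multinom of [:: i; j; k]].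

(* Main.v *)
Require Import Defs.
From HB Require Import structures.
From mathcomp Require Import all_boot all_order all_algebra.
From mathcomp Require Import mpoly fraction.
From mathcomp Require Import zify ring lra.
Import GRing.Theory.
Local Open Scope ring_scope.

Lemma mono3_0 i j l : (mono3 i j l) (0 : 'I_3) = i. Proof. by []. Qed.
Lemma mono3_1 i j l : (mono3 i j l) (1 : 'I_3) = j. Proof. by []. Qed.
Lemma mono3_2 i j l : (mono3 i j l) (2 : 'I_3) = l. Proof. by []. Qed.

Lemma mono3_sub0 i j l : (mono3 i j l - U_((0%R : 'I_3)))%MM = mono3 i.-1 j l.
Proof.
apply/mnmP => a; rewrite mnmBE mnm1E.
case: a => [[|[|[|a]]] Ha] //=; rewrite ?subn0 ?subn1 //.
Qed.
Lemma mono3_sub1 i j l : (mono3 i j l - U_((1%R : 'I_3)))%MM = mono3 i j.-1 l.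
Proof.
apply/mnmP => a; rewrite mnmBE mnm1E.
case: a => [[|[|[|a]]] Ha] //=; rewrite ?subn0 ?subn1 //.
Qed.
Lemma mono3_sub2 i j l : (mono3 i j l - U_((2%R : 'I_3)))%MM = mono3 i j l.-1.
Proof.
apply/mnmP => a; rewrite mnmBE mnm1E.
case: a => [[|[|[|a]]] Ha] //=; rewrite ?subn0 ?subn1 //.
Qed.
Lemma mcoeffMXU (p : Poly3) (a : 'I_3) m :
  (p * 'X_a)@_m = if (0 < m a)%N then p@_(m - U_(a))%MM else 0.
Proof.
case: ifP => h.
- have -> : m = (U_(a) + (m - U_(a)))%MM.
    apply/mnmP => i; rewrite mnmDE mnmBE mnm1E.
    case: eqP => [<-|_] /=; lia.
  by rewrite (mcoeffMX p U_(a)) addmC addmK.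
- apply: memN_msupp_eq0; rewrite (perm_mem (msuppMX p U_(a))).
  apply/mapP => -[m' _ E]; move: h; rewrite E mnmDE mnm1E eqxx.
  by [].
Qed.
Local Open Scope nat_scope.
Definition G (k i j l : nat) := if i+j+l == k then 'C((i+l).-1,l)*'C(i+j,j) else 0.

Lemma arith k i j l :
 G k.+2 i j l + (if 0<j then if 0<l then G k i j.-1 l.-1 else 0 else 0) =
 (if 0<i then G k.+1 i.-1 j l else 0) + (if 0<j then G k.+1 i j.-1 l else 0)
 + (if 0<l then G k.+1 i j l.-1 else 0).
Proof.
rewrite /G.
case: i => [|i]; case: j => [|j]; case: l => [|l] /=;
 rewrite ?addn0 ?add0n ?addSn ?addnS ?eqSS ?subn1 /=;
 try (case: eqP => // E).
all: rewrite ?bin0 ?binn ?muln1 ?mul1n.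
all: try done.
all: try (rewrite !binS; ring).
move: E; case: l => [|l] //= _; rewrite !bin_small //.
Qed.
Local Open Scope ring_scope.

Lemma mono3_eq a b c i j l :
  (mono3 a b c == mono3 i j l) = [&& a == i, b == j & c == l].
Proof.
apply/eqP/and3P => [E|[/eqP-> /eqP-> /eqP->]] //.
have E0 := congr1 (fun m : 'X_{1..3} => m (0%R:'I_3)) E.
have E1 := congr1 (fun m : 'X_{1..3} => m (1%R:'I_3)) E.
have E2 := congr1 (fun m : 'X_{1..3} => m (2%R:'I_3)) E.
by rewrite /= !mono3_0 !mono3_1 !mono3_2 in E0 E1 E2; rewrite E0 E1 E2 !eqxx.
Qed.

Lemma mono3_000 : 0%MM = mono3 0 0 0.
Proof. by apply/mnmP => a; rewrite mnm0E; case: a => [[|[|[|a]]] Ha]. Qed.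
Lemma mono3_U0 : U_((0%R : 'I_3))%MM = mono3 1 0 0.
Proof. by apply/mnmP => a; rewrite mnm1E; case: a => [[|[|[|a]]] Ha]. Qed.
Lemma mono3_U1 : U_((1%R : 'I_3))%MM = mono3 0 1 0.
Proof. by apply/mnmP => a; rewrite mnm1E; case: a => [[|[|[|a]]] Ha]. Qed.
Lemma mono3_U2 : U_((2%R : 'I_3))%MM = mono3 0 0 1.
Proof. by apply/mnmP => a; rewrite mnm1E; case: a => [[|[|[|a]]] Ha]. Qed.

Fixpoint Q (k : nat) : Poly3 :=
  match k with
  | 0 => 1
  | k1.+1 => match k1 with
             | 0 => xP + yP
             | k0.+1 => (xP + yP + zP) * Q k1 - yP * zP * Q k0
             end
  end.

Arguments Q : simpl never.
Lemma QSS k : Q k.+2 = (xP + yP + zP) * Q k.+1 - yP * zP * Q k.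
Proof. by []. Qed.

Lemma coefQ k i j l : (Q k)@_(mono3 i j l) = (G k i j l)%:R.
Proof.
suff H : forall k, (forall i j l, (Q k)@_(mono3 i j l) = (G k i j l)%:R) /\
                   (forall i j l, (Q k.+1)@_(mono3 i j l) = (G k.+1 i j l)%:R).
  by case: (H k).
clear; elim=> [|k [IH0 IH1]].
  split=> i j l.
  - have -> : Q 0 = 1 by [].
    rewrite mcoeff1 mono3_000 mono3_eq /G.
    by case: i => [|i]; case: j => [|j]; case: l => [|l]; rewrite ?addnS ?addSn.
  - have -> : Q 1 = 'X_(0%R : 'I_3) + 'X_(1%R : 'I_3) by [].
    rewrite mcoeffD !mcoeffX mono3_U0 mono3_U1 !mono3_eq /G.
    case: i => [|[|i]]; case: j => [|[|j]]; case: l => [|[|l]];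
      rewrite ?addnS ?addSn ?addn0 //=.
split=> // i j l.
rewrite QSS.
have -> : (xP + yP + zP) * Q k.+1 - yP * zP * Q k =
  Q k.+1 * 'X_(0%R : 'I_3) + Q k.+1 * 'X_(1%R : 'I_3) + Q k.+1 * 'X_(2%R : 'I_3)
  - (Q k * 'X_(2%R : 'I_3)) * 'X_(1%R : 'I_3) by rewrite /xP /yP /zP; ring.
rewrite mcoeffB !mcoeffD !mcoeffMXU !mono3_0 !mono3_1 !mono3_2.
rewrite !mono3_sub0 !mono3_sub1 !mono3_sub2.
have := arith k i j l.
case: (0 < i)%N; case: (0 < j)%N; case: (0 < l)%N => /= H;
  rewrite ?mcoeffMXU ?mono3_2 ?mono3_sub2 /= ?IH0 ?IH1;
  move/(congr1 (fun n => n%:R : rat)): H; rewrite !natrD; lra.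
Qed.

Definition sq : 3.-tuple Poly3 := [tuple xP ^+ 2; yP ^+ 2; zP ^+ 2].

Lemma addmm_eq (m0 m : 'X_{1..3}) : ((m0 + m0)%MM == (m + m)%MM) = (m0 == m).
Proof.
apply/eqP/eqP => [/mnmP E|->] //; apply/mnmP => i.
by have := E i; rewrite !mnmDE; lia.
Qed.

Lemma compX_sq (m0 : 'X_{1..3}) : 'X_[m0] \mPo sq = 'X_[(m0 + m0)%MM].
Proof.
rewrite comp_mpolyX mpolyXE_id; apply: eq_bigr => i _.
rewrite mnmDE.
have -> : (m0 i + m0 i = 2 * m0 i)%N by lia.
rewrite exprM.
by case: i => [[|[|[|a]]] Ha].
Qed.

Lemma mcoeff_sq (p : Poly3) m : (p \mPo sq)@_(m + m) = p@_m.
Proof.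
rewrite comp_mpolyEX [in RHS](mpolyE p) !raddf_sum /=.
apply: eq_bigr => m0 _; rewrite !mcoeffZ compX_sq !mcoeffX addmm_eq //.
Qed.

Lemma X_neq0 (a : 'I_3) : ('X_a : Poly3) != 0.
Proof.
apply/eqP => E; have := @mcoeffXU 3 rat a a; rewrite E mcoeff0 eqxx => /eqP.
by rewrite eq_sym oner_eq0.
Qed.

Definition N k := Q k \mPo sq.

Lemma N_neq0 k : N k != 0.
Proof.
apply/eqP => E; have := mcoeff_sq (Q k) (mono3 k 0 0).
rewrite -/(N k) E mcoeff0 coefQ /G !addn0 eqxx !bin0 muln1.
by move/eqP; rewrite eq_sym oner_eq0.
Qed.

Lemma detQ k : Q k.+2 * Q k - Q k.+1 ^+ 2 = xP * yP ^+ k * zP ^+ k.+1.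
Proof.
elim: k => [|k IH].
  have -> : Q 2 = (xP + yP + zP) * (xP + yP) - yP * zP * 1 by [].
  have -> : Q 1 = xP + yP by [].
  have -> : Q 0 = 1 by [].
  ring.
have e := QSS k; have e' := QSS k.+1.
have -> : xP * yP ^+ k.+1 * zP ^+ k.+2 = yP * zP * (xP * yP ^+ k * zP ^+ k.+1)
  by rewrite !exprS; ring.
rewrite -IH e'; apply/eqP; rewrite -subr_eq0; apply/eqP.
have -> : ((xP + yP + zP) * Q k.+2 - yP * zP * Q k.+1) * Q k.+1 - Q k.+2 ^+ 2
  - yP * zP * (Q k.+2 * Q k - Q k.+1 ^+ 2)
  = Q k.+2 * ((xP + yP + zP) * Q k.+1 - yP * zP * Q k - Q k.+2) by ring.
by rewrite -e subrr mulr0.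
Qed.

Lemma N0 : N 0 = 1.
Proof. by rewrite /N comp_mpoly1. Qed.
Lemma N1 : N 1 = xP ^+ 2 + yP ^+ 2.
Proof.
rewrite /N; have -> : Q 1 = 'X_(0%R : 'I_3) + 'X_(1%R : 'I_3) by [].
by rewrite rmorphD /= !comp_mpolyXU.
Qed.

Lemma detN k : N k.+2 * N k - N k.+1 ^+ 2 = xP ^+ 2 * (yP ^+ 2) ^+ k * (zP ^+ 2) ^+ k.+1.
Proof.
have := congr1 (comp_mpoly sq) (detQ k).
by rewrite rmorphB !rmorphM !rmorphXn /= !comp_mpolyXU.
Qed.

Definition L k : RatFun3 :=
  if k is k'.+1 then tofrac (N k) / tofrac (yP ^+ k' * zP ^+ k) else yF.

Lemma yF_neq0 : yF != 0. Proof. rewrite /yF. rewrite tofrac_eq0. exact: X_neq0. Qed.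
Lemma zF_neq0 : zF != 0. Proof. rewrite /zF tofrac_eq0. exact: X_neq0. Qed.
Lemma NF_neq0 k : tofrac (N k) != 0. Proof. rewrite tofrac_eq0. exact: N_neq0. Qed.
Lemma L_neq0 k : L k != 0.
Proof.
case: k => [|k]; first exact: yF_neq0.
rewrite [L _]/L.
apply: mulf_neq0; first exact: NF_neq0.
rewrite invr_neq0 // tofracM !tofracXn.
apply: mulf_neq0; apply: expf_neq0; [exact: yF_neq0 | exact: zF_neq0].
Qed.
Lemma G1 (a b c d e f g : RatFun3) : b != 0 -> d != 0 -> f != 0 ->
  a * c * f ^+ 2 = (e ^+ 2 + g * f ^+ 2) * (b * d) ->
  a / b * (c / d) = (e / f) ^+ 2 + g.
Proof.
move=> bn dn fn h.
have f2 : f ^+ 2 != 0 := expf_neq0 2 fn.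
rewrite mulf_div expr_div_n -[g in RHS](mulfK f2) -mulrDl.
apply/eqP.
rewrite (eqr_div _ _ (mulf_neq0 bn dn) f2).
rewrite h; exact: eqxx.
Qed.

Lemma L_S (k : nat) : (L k.+1) = tofrac (N k.+1) / (yF ^+ k * zF ^+ k.+1).
Proof. by rewrite [L _]/L tofracM !tofracXn. Qed.

Lemma den_neq0 k m : yF ^+ k * zF ^+ m != 0.
Proof. apply: mulf_neq0; apply: expf_neq0; [exact: yF_neq0 | exact: zF_neq0]. Qed.

Lemma keyL k : L k.+2 * L k = L k.+1 ^+ 2 + xF ^+ 2.
Proof.
case: k => [|k].
  have h := congr1 (@tofrac _) (detN 0).
  rewrite N0 mulr1 !expr0 mulr1 !tofracM !tofracB !tofracXn -/xF -/yF -/zF in h.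
  rewrite !L_S -[L 0](divr1 yF).
  apply: G1; [exact: den_neq0 | exact: oner_neq0 | exact: den_neq0 | ].
  have -> : tofrac (N 2) = tofrac (N 1) ^+ 2 + xF * xF * (zF * zF)
    by rewrite -h addrC subrK.
  ring.
have h := congr1 (@tofrac _) (detN k.+1).
rewrite tofracB (tofracXn 2 (N k.+2)) (tofracM (N k.+3)) (tofracM (_ * _)) in h.
rewrite (tofracM (xP ^+ 2)) (tofracXn k.+1 (yP^+2))
  (tofracXn k.+2 (zP^+2)) (tofracXn 2 xP) (tofracXn 2 yP) (tofracXn 2 zP)
  -/xF -/yF -/zF in h.
rewrite !L_S.
apply: G1; [exact: den_neq0 | exact: den_neq0 | exact: den_neq0 | ].
have -> : tofrac (N k.+3) * tofrac (N k.+1) = tofrac (N k.+2) ^+ 2 +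
   xF ^+ 2 * (yF ^+ 2) ^+ k.+1 * (zF ^+ 2) ^+ k.+2 by rewrite -h addrC subrK.
rewrite (exprAC yF 2) (exprAC zF 2) !exprS.
move: (yF ^+ k) (zF ^+ k) => yk zk.
ring.
Qed.

Lemma pairL k : Markov_one_pair k = (L k, L k.+1).
Proof.
elim: k => [|k IH].
  have -> : Markov_one_pair 0 = (yF, (xF ^+ 2 + yF ^+ 2) / zF) by [].
  rewrite L_S N1 tofracD (tofracXn 2 xP) (tofracXn 2 yP) expr0 mul1r expr1.
  reflexivity.
have -> : Markov_one_pair k.+1 =
  let (a, b) := Markov_one_pair k in (b, (b ^+ 2 + xF ^+ 2) / a) by [].
rewrite IH; cbv beta iota zeta.
rewrite -keyL mulfK; first reflexivity.
exact: L_neq0.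
Qed.

Theorem theorem5p2 (n : nat) (P : {mpoly rat[3]}) :
  (1 <= n)%N ->
  is_numerator_one n.+1 P ->
  let A := fun i j : nat => P@_(mono3 i j (n.+1 - i - j)) in
  (forall i j : nat, (i + j <= n.+1)%N -> (j <= n)%N ->
     A i j = ('C(n - j, n.+1 - i - j) * 'C(i + j, j))%:R) /\
  A 0%N n.+1 = 1 /\
  (forall i : nat, (0 < i)%N -> A i n.+1 = 0).
Proof.
move=> hn [_ hP] A.
have hM : Markov_one n.+1 = L n.+1 by rewrite /Markov_one pairL.
rewrite hM L_S (tofracM (yP ^+ n.+1.-1)) (tofracXn n.+1.-1 yP) (tofracXn n.+1 zP) in hP.
have dn : yF ^+ n * zF ^+ n.+1 != 0 := den_neq0 n n.+1.
move/(congr1 (fun t => t * (yF ^+ n * zF ^+ n.+1))): hP.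
rewrite !divfK; [ | exact: dn | exact: dn] => hP.
have hPQ : P \mPo sq = N n.+1.
  apply/eqP; rewrite -tofrac_eq; apply/eqP; symmetry; exact: hP.
have hcoef : forall m, P@_m = (Q n.+1)@_m.
  by move=> m; rewrite -(mcoeff_sq P) hPQ /N mcoeff_sq.
split; [|split].
- move=> i j hij hj; rewrite /A hcoef coefQ /G.
  rewrite (_ : (i + j + (n.+1 - i - j) == n.+1)%N = true); last by apply/eqP; lia.
  have -> : ((i + (n.+1 - i - j)).-1 = n - j)%N by lia.
  reflexivity.
- rewrite /A hcoef coefQ /G.
  have -> : (n.+1 - 0 - n.+1 = 0)%N by lia.
  rewrite add0n !addn0 eqxx bin0 binn.
  reflexivity.
- move=> i hi; rewrite /A hcoef coefQ /G.
  case: eqP => [E|_]; last reflexivity.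
  exfalso; lia.
Qed.
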